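(* Let $G$ be an edge-coloured digraph. Then $\mathscr{X}_G(x)\in\mathrm{QSym}(x)$.
   Context: An edge-coloured digraph is a finite simple digraph $G$ (no loops; for distinct vertices $a,b$ at most one edge from $a$ to $b$) in which every edge is of one of three types: dashed ($a\dashrightarrow b$), solid ($a\rightarrow b$) or double ($a\Rightarrow b$). A proper vertex-colouring is $\kappa:V(G)\to\mathbb{P}$ with $\kappa(a)\ne\kappa(b)$ for dashed edges $(a,b)$, $\kappa(a)<\kappa(b)$ for solid, $\kappa(a)\le\kappa(b)$ for double. $\mathscr{X}_G(x)=\sum_\kappa\prod_{a\in V(G)}x_{\kappa(a)}$ summed over proper vertex-colourings, in commuting variables $x_1,x_2,\dots$. $\mathrm{QSym}(x)$ is the set of bounded-degree formal power series such that for each composition $(\alpha_1,\dots,\alpha_k)$ all monomials $x_{i_1}^{\alpha_1}\cdots x_{i_k}^{\alpha_k}$ with $i_1<\dots<i_k$ have the same coefficient. *)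

(* Defs.v *)
From mathcomp Require Import all_boot.
Set Implicit Arguments. Unset Strict Implicit. Unset Printing Implicit Defensive.

Inductive ecol := Dashed | Solid | Double.

(* An edge-coloured digraph on the finite vertex type V is given by
   e : V -> V -> option ecol ; e a b = Some t means there is an edge a -> b
   of type t, None means no edge (so at most one edge from a to b).
   Loops are excluded by a hypothesis of the theorem. *)

(* Proper colouring with colours in nat (the order of colours is what matters). *)
Definition proper (V : finType) (e : V -> V -> option ecol) (k : V -> nat) : bool :=
  [forall a, forall b,
     match e a b with
     | Some Dashed => k a != k b
     | Some Solid => k a < k b
     | Some Double => k a <= k b
     | None => true
     end].

(* Formal power series in commuting variables x_1, x_2, ... with nat
   coefficients, represented by their coefficient function on monomials.
   A monomial is encoded by its exponent sequence s : seq nat, where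
   nth 0 s i is the exponent of x_(i+1); trailing zeros are irrelevant. *)
Definition series := seq nat -> nat.

(* Coefficient of the monomial s in X_G: the number of proper colourings
   kappa : V -> P with #{a | kappa a = i+1} = nth 0 s i for all i.
   Such a colouring only uses colours 1..size s, so it is encoded as
   k : V -> 'I_(size s), with kappa a = k a + 1. *)
Definition chromX (V : finType) (e : V -> V -> option ecol) : series :=
  fun s => #|[set k : {ffun V -> 'I_(size s)} |
               proper e (fun a => nat_of_ord (k a)) &&
               [forall i : 'I_(size s), #|[set a | k a == i]| == nth 0 s i]]|.

(* The monomial x_(i_1)^(al_1) ... x_(i_k)^(al_k) (indices i_t >= 1). *)
Definition mono (idx al : seq nat) : seq nat :=
  mkseq (fun p => if p.+1 \in idx then nth 0 al (index p.+1 idx) else 0)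
        (\max_(j <- idx) j).

Definition composition (al : seq nat) : bool := all (fun a => 0 < a) al.

Definition isQSym (f : series) : Prop :=
  (exists d, forall s, f s != 0 -> sumn s <= d) /\
  (forall al idx idx' : seq nat, composition al ->
     size idx = size al -> sorted ltn idx -> all (fun i => 0 < i) idx ->
     size idx' = size al -> sorted ltn idx' -> all (fun i => 0 < i) idx' ->
     f (mono idx al) = f (mono idx' al)).

(* Main.v *)
Require Import Defs.
From mathcomp Require Import all_boot.
From mathcomp Require Import zify.

Lemma proper_eq (V : finType) (e : V -> V -> option ecol) (k k' : V -> nat) :
  (forall a b, (k' a < k' b) = (k a < k b)) -> Defs.proper e k' = Defs.proper e k.
Proof.
move=> H; rewrite /Defs.proper; apply: eq_forallb => a; apply: eq_forallb => b.
case: (e a b) => [[]|] //.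
- by rewrite !neq_ltn !H.
- by rewrite (leqNgt (k' a)) (leqNgt (k a)) H.
Qed.

Lemma chromX_emb (V : finType) (e : V -> V -> option ecol) (s t : seq nat)
  (g : 'I_(size s) -> 'I_(size t)) :
  (forall i j, (g i < g j) = (i < j)) ->
  (forall i, nth 0 t (g i) = nth 0 s i) ->
  (forall j : 'I_(size t), (forall i, g i != j) -> nth 0 t j = 0) ->
  chromX e s = chromX e t.
Proof.
move=> gmono gs gt.
have ginj : injective g.
  move=> i j Hij; apply/val_inj/eqP.
  case: (ltngtP i j) => // h.
  - by move: (gmono i j); rewrite h Hij ltnn.
  - by move: (gmono j i); rewrite h Hij ltnn.
pose F := fun k : {ffun V -> 'I_(size s)} => [ffun a => g (k a)] : {ffun V -> 'I_(size t)}.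
have Finj : injective F.
  move=> k1 k2 H; apply/ffunP => a; apply: ginj.
  by have := congr1 (fun f : {ffun V -> 'I_(size t)} => f a) H; rewrite !ffunE.
rewrite /chromX -(card_imset _ Finj); apply: eq_card => k'.
rewrite [in RHS]inE; apply/imsetP/idP.
- case=> k; rewrite inE => /andP[pk /forallP ck] ->; apply/andP; split.
    rewrite (@proper_eq _ _ (fun a => nat_of_ord (k a))) // => a b.
    by rewrite /F !ffunE gmono.
  apply/forallP => j; case: (pickP (fun i => g i == j)) => [i /eqP <-| none].
    have -> : [set a | F k a == g i] = [set a | k a == i].
      by apply/setP=> a; rewrite !inE /F ffunE (inj_eq ginj).
    by rewrite gs; exact: ck.
  rewrite gt; last by move=> i; rewrite none.
  rewrite cards_eq0; apply/eqP/setP => a; rewrite !inE /F ffunE.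
  exact: none.
- move=> /andP[pk' /forallP ck'].
  have ex : forall a, exists i, g i = k' a.
    move=> a; case: (pickP (fun i => g i == k' a)) => [i /eqP ?| none].
      by exists i.
    exfalso; move: (ck' (k' a)); rewrite (gt (k' a)); last first.
      by move=> i; rewrite none.
    by rewrite cards_eq0 => /eqP /setP /(_ a); rewrite !inE eqxx.
  have [h hh] := fin_all_exists ex.
  exists [ffun a => h a]; last by apply/ffunP => a; rewrite /F !ffunE hh.
  rewrite inE; apply/andP; split.
    rewrite (@proper_eq _ _ (fun a => nat_of_ord (k' a))) // => a b.
    by rewrite !ffunE -!hh gmono.
  apply/forallP => i; rewrite -gs.
  have -> : [set a | [ffun a => h a] a == i] = [set a | k' a == g i].
    by apply/setP => a; rewrite !inE ffunE -hh (inj_eq ginj).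
  exact: ck'.
Qed.

Lemma chromX_deg (V : finType) (e : V -> V -> option ecol) s :
  chromX e s != 0 -> sumn s <= #|V|.
Proof.
rewrite /chromX cards_eq0 => /set0Pn [k]; rewrite inE => /andP[_ /forallP ck].
suff -> : sumn s = #|V| by [].
have -> : sumn s = \sum_(i < size s) nth 0 s i by rewrite sumnE (big_nth 0) big_mkord.
rewrite -sum1_card (partition_big k predT) //=; apply: eq_bigr => i _.
rewrite -(eqP (ck i)) -sum1_card; apply: eq_bigl => a; by rewrite !inE.
Qed.

Lemma chromX_monoE (V : finType) (e : V -> V -> option ecol) (al idx : seq nat) :
  size idx = size al -> sorted ltn idx -> all (fun i => 0 < i) idx ->
  chromX e al = chromX e (mono idx al).
Proof.
move=> Hsz Hsort Hpos.
have pos : forall i, i < size idx -> 0 < nth 0 idx i.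
  by move=> i hi; apply: (all_nthP 0 Hpos).
have msz : size (mono idx al) = \max_(j <- idx) j by rewrite size_mkseq.
have gP : forall i : 'I_(size al), (nth 0 idx i).-1 < size (mono idx al).
  move=> i; have hi : i < size idx by rewrite Hsz.
  have hle : nth 0 idx i <= \max_(j <- idx) j.
    by apply: (leq_bigmax_seq (nth 0 idx i) (mem_nth 0 hi)).
  have := pos _ hi; rewrite msz; move: hle.
  move: (\max_(j <- idx) j) (nth 0 idx i) => m x; lia.
pose g := fun i => Ordinal (gP i).
have nmono : forall i j, i < size idx -> j < size idx ->
    (nth 0 idx i < nth 0 idx j) = (i < j).
  move=> i j hi hj; case: (ltngtP i j) => h.
  - by apply: (sorted_ltn_nth ltn_trans 0 Hsort).
  - apply/negbTE; rewrite -leqNgt; apply: ltnW.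
    by apply: (sorted_ltn_nth ltn_trans 0 Hsort).
  - by rewrite h ltnn.
have uq : uniq idx by apply: (sorted_uniq ltn_trans ltnn).
apply: (@chromX_emb _ _ _ _ g).
- move=> i j /=; have hi : i < size idx by rewrite Hsz.
  have hj : j < size idx by rewrite Hsz.
  have := pos _ hi; have := pos _ hj; have := nmono _ _ hi hj.
  case: (nth 0 idx i) => [|x]; case: (nth 0 idx j) => [|y] //= -> //.
- move=> i /=; have hi : i < size idx by rewrite Hsz.
  rewrite nth_mkseq; last by rewrite -msz gP.
  rewrite prednK ?pos // mem_nth // index_uniq //.
- move=> j H; rewrite nth_mkseq; last by rewrite -msz.
  case: ifP => // hin; exfalso.
  have hi : index j.+1 idx < size al by rewrite -Hsz index_mem.
  move: (H (Ordinal hi)); apply/negP; rewrite negbK; apply/eqP/val_inj => /=.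
  by rewrite nth_index.
Qed.

Theorem mainTheorem6 (V : finType) (e : V -> V -> option ecol)
  (noloop : forall a, e a a = None) :
  isQSym (chromX e).
Proof.
split; first by exists #|V| => s; apply: chromX_deg.
move=> al idx idx' _ h1 h2 h3 h4 h5 h6.
by rewrite -(@chromX_monoE _ e _ _ h1 h2 h3) -(@chromX_monoE _ e _ _ h4 h5 h6).
Qed.
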